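(* Let $W$ be a prewedge and $a,b,v\in W$. Then $a+v\le b+v$ if and only if $a+\tfrac1n v\le b+\tfrac1n v$ for every integer $n\ge1$.
   Context: A prewedge is a set $W$ with a commutative associative addition with neutral element $0$ and a multiplication $[0,\infty)\times W\to W$, $(\lambda,v)\mapsto\lambda v$, such that $\lambda(\eta v)=(\lambda\eta)v$, $0v=0$, $1v=v$, $(\lambda+\eta)v=\lambda v+\eta v$, $\lambda(v+w)=\lambda v+\lambda w$ for all $\lambda,\eta\ge0$, $v,w\in W$. It carries the preorder $v\le w$ iff $v+z=w$ for some $z\in W$. *)

(* Defs.v *)
(* scalars are real numbers; the scalar multiplication is a
   total function R -> W -> W whose axioms are only required for
   nonnegative scalars, i.e. only its restriction to [0,oo) matters. *)
From Stdlib Require Import Reals.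
Open Scope R_scope.

Record Prewedge := {
  pw_carrier :> Type;
  pw_add : pw_carrier -> pw_carrier -> pw_carrier;
  pw_zero : pw_carrier;
  pw_smul : R -> pw_carrier -> pw_carrier;
  pw_addC : forall v w, pw_add v w = pw_add w v;
  pw_addA : forall u v w, pw_add u (pw_add v w) = pw_add (pw_add u v) w;
  pw_add0 : forall v, pw_add pw_zero v = v;
  pw_smulA : forall l e v, 0 <= l -> 0 <= e ->
      pw_smul l (pw_smul e v) = pw_smul (l * e) v;
  pw_smul0 : forall v, pw_smul 0 v = pw_zero;
  pw_smul1 : forall v, pw_smul 1 v = v;
  pw_smulDl : forall l e v, 0 <= l -> 0 <= e ->
      pw_smul (l + e) v = pw_add (pw_smul l v) (pw_smul e v);
  pw_smulDr : forall l v w, 0 <= l ->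
      pw_smul l (pw_add v w) = pw_add (pw_smul l v) (pw_smul l w)
}.

Definition pw_le (W : Prewedge) (v w : W) : Prop :=
  exists z : W, pw_add W v z = w.

(* Main.v *)
Require Import Defs.
From Stdlib Require Import Reals Lra Lia.
Open Scope R_scope.

Lemma pw_swap (W : Prewedge) (x y z : W) :
  pw_add W x (pw_add W y z) = pw_add W y (pw_add W x z).
Proof. rewrite !pw_addA, (pw_addC W x y). reflexivity. Qed.

Lemma step_lemma (W : Prewedge) (a b v z : W) (t : R) (ht : 0 <= t) :
  pw_add W (pw_add W a v) z = pw_add W b v ->
  forall k : nat, exists w : W,
    pw_add W (pw_add W (pw_smul W (INR k * t) a) (pw_smul W t v)) w =
    pw_add W (pw_smul W (INR k * t) b) (pw_smul W t v).
Proof.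
  intros H k.
  assert (Key : pw_add W (pw_add W (pw_smul W t a) (pw_smul W t v)) (pw_smul W t z)
               = pw_add W (pw_smul W t b) (pw_smul W t v)).
  { rewrite <- !pw_smulDr by exact ht. now rewrite H. }
  induction k as [|k [w IH]].
  - exists (pw_zero W). simpl. rewrite Rmult_0_l, !pw_smul0.
    rewrite pw_addC. apply pw_add0.
  - exists (pw_add W (pw_smul W t z) w).
    assert (E : INR (S k) * t = INR k * t + t) by (rewrite S_INR; ring).
    assert (Hk : 0 <= INR k * t) by (apply Rmult_le_pos; [apply pos_INR|exact ht]).
    rewrite E, !pw_smulDl by assumption.
    set (A := pw_smul W (INR k * t) a) in *.
    set (B := pw_smul W (INR k * t) b) in *.
    set (A1 := pw_smul W t a) in *.
    set (B1 := pw_smul W t b) in *.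
    set (V := pw_smul W t v) in *.
    set (Z := pw_smul W t z) in *.
    transitivity (pw_add W (pw_add W A (pw_add W (pw_add W A1 V) Z)) w).
    { rewrite !pw_addA. reflexivity. }
    rewrite Key.
    transitivity (pw_add W (pw_add W (pw_add W A V) w) B1).
    { rewrite <- !pw_addA. f_equal. rewrite (pw_swap W B1 V w).
      rewrite (pw_addC W B1 w). reflexivity. }
    rewrite IH. rewrite <- !pw_addA. f_equal. apply pw_addC.
Qed.

Theorem mainTheorem8 (W : Prewedge) (a b v : W) :
  pw_le W (pw_add W a v) (pw_add W b v) <->
  (forall n : nat, (1 <= n)%nat ->
     pw_le W (pw_add W a (pw_smul W (/ INR n) v))
             (pw_add W b (pw_smul W (/ INR n) v))).
Proof.
  split.
  - intros [z H] n Hn.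
    assert (Hpos : 0 < INR n) by (apply lt_0_INR; lia).
    destruct (step_lemma W a b v z (/ INR n)
                (Rlt_le _ _ (Rinv_0_lt_compat _ Hpos)) H n) as [w Hw].
    rewrite Rinv_r in Hw by lra.
    rewrite !pw_smul1 in Hw. now exists w.
  - intros H. specialize (H 1%nat (le_n 1)).
    simpl in H. rewrite Rinv_1, pw_smul1 in H. exact H.
Qed.
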